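(* Fix $\gamma\in\Gamma$ and an edge $l\in\mathcal E$. Consider the cascade with initial demand $d=e_1+\varepsilon\gamma$ (so node $1$ has the largest demand) in which edge $l$ fails first. Then there is $\varepsilon_0>0$ such that the cascade sequence (the sets of edges failing at each step) and the final graph $\mathcal G^{(\mathrm{end})}$ are the same for all $0<\varepsilon<\varepsilon_0$.
   Context: $\mathcal G=(\mathcal N,\mathcal E)$ is a simple connected graph with nodes $\{1,\dots,n\}$, $m$ edges with orientations chosen so that $Vd\ge0$ for small $\varepsilon$, incidence matrix $C$ ($C_{e,i}=1$ if $e$ enters $i$, $-1$ if it leaves $i$, else $0$), PTDF matrix $V=C(C^TC)^+$, $e$ all-ones, $\lambda\in(0,1)$, $\lambda^*\ge\lambda$. $\Gamma=\{\gamma\in\mathbb R^n:\gamma_1=0,\gamma\ge0,e^T\gamma=1\}$. $g^*(d)$ is the unique minimizer of $\frac12\sum_ig_i^2$ over $g\ge0$ with $e^Tg=e^Td$ and $-\lambda|Vd|\le V(d-g)\le\lambda|Vd|$. Cascade: emergency limits $F=\lambda^*|Vd|$. Start with $\mathcal G^{(1)}=\mathcal G$, $d^{(1)}=d$, $g^{(1)}=g^*(d)$; the first failing edge is removed. Whenever $\mathcal G^{(r+1)}$ (node set $\mathcal N$, surviving edges $\mathcal E^{(r+1)}$) is obtained by removing edges, for each connected component with node set $\mathcal N_{\mathcal C}$ put $\theta=\sum_{\mathcal N_{\mathcal C}}d^{(r)}_i/\sum_{\mathcal N_{\mathcal C}}g^{(r)}_i$; if $\theta\ge1$ set $d^{(r+1)}_i=d^{(r)}_i/\theta$,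 $g^{(r+1)}_i=g^{(r)}_i$, and if $\theta\le1$ set $d^{(r+1)}_i=d^{(r)}_i$, $g^{(r+1)}_i=\theta g^{(r)}_i$ on $\mathcal N_{\mathcal C}$. Flows $f^{(r+1)}=V^{(r+1)}(d^{(r+1)}-g^{(r+1)})$ with $V^{(r+1)}$ the PTDF matrix of $\mathcal G^{(r+1)}$ (incidence matrix with removed rows zeroed); relative exceedances $\psi^{(r+1)}_e=|f^{(r+1)}_e|/F_e$, $e\in\mathcal E^{(r+1)}$. If none exceeds $1$ the cascade stops; otherwise the edges $T(\mathcal M)$ fail, where $\mathcal M$ is the set of maximizers of $\psi^{(r+1)}$ and $T:2^{\mathcal E}\to2^{\mathcal E}$ is a fixed deterministic tie-breaking rule with $\emptyset\ne T(\mathcal M)\subseteq\mathcal M$. $\mathcal G^{(\mathrm{end})}$ is the graph when the cascade stops. *)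

(* Defs.v *)
From HB Require Import structures.
From mathcomp Require Import all_boot all_order all_algebra.
From mathcomp Require Import boolp reals constructive_ereal.
From mathcomp Require classical_sets.
Set Implicit Arguments. Unset Strict Implicit. Unset Printing Implicit Defensive.
Import Order.TTheory GRing.Theory Num.Theory.
Local Open Scope ring_scope.

Section Cascade.
Variables (R : realType) (n m : nat).
(* nodes are 'I_n.+1 (node "1" of the paper is ord0); edges are 'I_m;
   edge e is oriented from src e to tgt e *)
Variables (src tgt : 'I_m -> 'I_n.+1).

Definition simple_graph : Prop :=
  (forall e, src e != tgt e) /\
  (forall e e', ((src e == src e') && (tgt e == tgt e'))
                || ((src e == tgt e') && (tgt e == src e')) -> e = e').

Definition adjS (S : {set 'I_m}) : rel 'I_n.+1 :=
  fun i j => [exists e in S, ((src e == i) && (tgt e == j))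
                             || ((src e == j) && (tgt e == i))].

Definition connected_graph : Prop := forall i j, connect (adjS setT) i j.

Definition comp (S : {set 'I_m}) (i : 'I_n.+1) : {set 'I_n.+1} :=
  [set j | connect (adjS S) i j].

Definition incidence : 'M[R]_(m, n.+1) :=
  \matrix_(e, i) ((tgt e == i)%:R - (src e == i)%:R).

Definition incidenceS (S : {set 'I_m}) : 'M[R]_(m, n.+1) :=
  \matrix_(e, i) (if e \in S then incidence e i else 0).

Definition penrose (p q : nat) (A : 'M[R]_(p, q)) (X : 'M[R]_(q, p)) : Prop :=
  [/\ A *m X *m A = A, X *m A *m X = X,
      (A *m X)^T = A *m X & (X *m A)^T = X *m A].
Definition pinv (p q : nat) (A : 'M[R]_(p, q)) : 'M[R]_(q, p) :=
  classical_sets.xget 0 (penrose A).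

Definition ptdf (S : {set 'I_m}) : 'M[R]_(m, n.+1) :=
  incidenceS S *m pinv ((incidenceS S)^T *m incidenceS S).

Definition absv (p : nat) (v : 'cV[R]_p) : 'cV[R]_p := map_mx (fun x => `|x|) v.

Definition gfeasible (lam : R) (d g : 'cV[R]_n.+1) : Prop :=
  [/\ forall i, 0 <= g i 0,
      \sum_i g i 0 = \sum_i d i 0 &
      forall e, - (lam * `|(ptdf setT *m d) e 0|) <= (ptdf setT *m (d - g)) e 0
                <= lam * `|(ptdf setT *m d) e 0| ].

Definition gobj (g : 'cV[R]_n.+1) : R := 2^-1 * \sum_i (g i 0) ^+ 2.

Definition gstar (lam : R) (d : 'cV[R]_n.+1) : 'cV[R]_n.+1 :=
  classical_sets.xget 0 (fun g => gfeasible lam d g /\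
                   forall g', gfeasible lam d g' -> gobj g <= gobj g').

(* proportional rebalancing on each component of the graph with edges S *)
Definition comp_sums (S : {set 'I_m}) (d g : 'cV[R]_n.+1) (i : 'I_n.+1) : R * R :=
  (\sum_(j in comp S i) d j 0, \sum_(j in comp S i) g j 0).

Definition rebal_d (S : {set 'I_m}) (d g : 'cV[R]_n.+1) : 'cV[R]_n.+1 :=
  \col_i (let: (sd, sg) := comp_sums S d g i in
          if sg == 0 then (if sd == 0 then d i 0 else 0)   (* theta = +oo *)
          else let theta := sd / sg in
               if 1 <= theta then d i 0 / theta else d i 0).

Definition rebal_g (S : {set 'I_m}) (d g : 'cV[R]_n.+1) : 'cV[R]_n.+1 :=
  \col_i (let: (sd, sg) := comp_sums S d g i in
          if sg == 0 then g i 0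
          else let theta := sd / sg in
               if 1 <= theta then g i 0 else theta * g i 0).

(* relative exceedance |f_e| / F_e, in the extended reals (x/0 = +oo for x>0) *)
Definition psi (F f : 'cV[R]_m) (e : 'I_m) : \bar R :=
  if F e 0 == 0 then (if f e 0 == 0 then 0%E else +oo%E)
  else (`|f e 0| / F e 0)%:E.

Variable (T : {set 'I_m} -> {set 'I_m}).  (* tie-breaking rule *)
Variable (F : 'cV[R]_m).

(* Each step removes >= 1 edge, so fuel m suffices. *)
Fixpoint cascade_from (fuel : nat) (S Fail : {set 'I_m}) (d g : 'cV[R]_n.+1)
  : seq {set 'I_m} * {set 'I_m} :=
  let S' := S :\: Fail in
  let d' := rebal_d S' d g in
  let g' := rebal_g S' d g in
  let f := ptdf S' *m (d' - g') in
  if [forall e in S', (psi F f e <= 1%:E)%E] then ([:: Fail], S')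
  else match fuel with
       | 0 => ([:: Fail], S')
       | fuel'.+1 =>
         let M := [set e in S' | [forall e' in S', (psi F f e' <= psi F f e)%E]] in
         let r := cascade_from fuel' S' (T M) d' g' in
         (Fail :: r.1, r.2)
       end.

End Cascade.

Definition cascade (R : realType) (n m : nat) (src tgt : 'I_m -> 'I_n.+1)
  (lam lamS : R) (T : {set 'I_m} -> {set 'I_m}) (l : 'I_m) (d : 'cV[R]_n.+1)
  : seq {set 'I_m} * {set 'I_m} :=
  let V := @ptdf R n m src tgt setT in
  let F := lamS *: absv (V *m d) in
  @cascade_from R n m src tgt T F m setT [set l] d (@gstar R n m src tgt lam d).

Definition in_Gamma (R : realType) (n : nat) (gam : 'cV[R]_n.+1) : Prop :=
  [/\ gam ord0 0 = 0, forall i, 0 <= gam i 0 & \sum_i gam i 0 = 1].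

Definition demand (R : realType) (n : nat) (gam : 'cV[R]_n.+1) (eps : R) : 'cV[R]_n.+1 :=
  \col_i ((i == ord0)%:R) + eps *: gam.

(* Main.v *)
Require Import Defs.
From HB Require Import structures.
From mathcomp Require Import all_boot all_order all_algebra.
From mathcomp Require Import boolp reals constructive_ereal.
From mathcomp Require classical_sets.
From mathcomp Require Import ring lra zify.
From Stdlib Require Import Lia.
Import Order.TTheory GRing.Theory Num.Theory.
Local Open Scope ring_scope.
Set Implicit Arguments. Unset Strict Implicit. Unset Printing Implicit Defensive.



Section Ev.
Variable R : realType.

Definition ev (P : R -> Prop) := exists2 e : R, 0 < e & forall x, 0 < x < e -> P x.

Lemma ev_and P Q : ev P -> ev Q -> ev (fun x => P x /\ Q x).
Proof.
move=> [e1 e1p H1] [e2 e2p H2]; exists (Num.min e1 e2); first by rewrite lt_min e1p.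
move=> x /andP[x0]; rewrite lt_min => /andP[a b]; split; [apply: H1|apply: H2]; lra.
Qed.

Lemma ev_imp (P Q : R -> Prop) : (forall x, P x -> Q x) -> ev P -> ev Q.
Proof. by move=> H [e ep He]; exists e => // x /He /H. Qed.

Lemma ev_impP (P Q : R -> Prop) : (forall x, 0 < x -> P x -> Q x) -> ev P -> ev Q.
Proof. move=> H [e ep He]; exists e => // x hx; apply: H (He x hx); by case/andP: hx. Qed.

Lemma ev_ex P : ev P -> exists x, 0 < x /\ P x.
Proof. move=> [e ep He]; exists (e/2); split; first lra. apply: He; lra. Qed.

Lemma ev_true : ev (fun _ => True).
Proof. by exists 1. Qed.

Lemma ev_seq (I : eqType) (s : seq I) (P : I -> R -> Prop) :
  (forall i, i \in s -> ev (P i)) -> ev (fun x => forall i, i \in s -> P i x).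
Proof.
elim: s => [|a s IH] H; first by exists 1.
have := ev_and (H a (mem_head _ _)) (IH (fun i hi => H i (@mem_behead _ (a::s) _ hi))).
apply: ev_imp => x [Pa Ps] i; rewrite inE => /orP[/eqP->//|]; exact: Ps.
Qed.

Lemma ev_fin (I : finType) (P : I -> R -> Prop) :
  (forall i, ev (P i)) -> ev (fun x => forall i, P i x).
Proof.
move=> H; have := @ev_seq _ (enum I) P (fun i _ => H i).
by apply: ev_imp => x Hx i; apply: Hx; rewrite mem_enum.
Qed.

Definition evc (T : eqType) (b : R -> T) := exists c : T, ev (fun x => b x = c).

Lemma evc_const (T : eqType) (c : T) : evc (fun _ => c).
Proof. by exists c; exists 1. Qed.

Lemma evc_map (T U : eqType) (h : T -> U) (b : R -> T) : evc b -> evc (fun x => h (b x)).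
Proof. by move=> [c Hc]; exists (h c); apply: ev_imp Hc => x ->. Qed.

Lemma evc_pair (T U : eqType) (a : R -> T) (b : R -> U) :
  evc a -> evc b -> evc (fun x => (a x, b x)).
Proof.
by move=> [c Hc] [d Hd]; exists (c, d); apply: ev_imp (ev_and Hc Hd) => x [-> ->].
Qed.

Lemma evc_ffun (I : finType) (T : eqType) (b : I -> R -> T) :
  (forall i, evc (b i)) -> evc (fun x => [ffun i => b i x]).
Proof.
move=> H; have [c Hc] := fin_all_exists H.
exists [ffun i => c i]; apply: ev_imp (ev_fin Hc) => x Hx.
by apply/ffunP => i; rewrite !ffunE.
Qed.

Lemma evc_ext (T : eqType) (a b : R -> T) : ev (fun x => a x = b x) -> evc b -> evc a.
Proof. by move=> H [c Hc]; exists c; apply: ev_imp (ev_and H Hc) => x [-> ->]. Qed.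

Lemma poly_bound (p : {poly R}) : exists B, 0 <= B /\ forall x, `|x| <= 1 -> `|p.[x]| <= B.
Proof.
elim/poly_ind: p => [|p c [B [B0 HB]]]; first by exists 0; split => // x _; rewrite horner0 normr0.
exists (B + `|c|); split; first by rewrite addr_ge0.
move=> x hx; rewrite hornerMXaddC.
apply: le_trans (ler_normD _ _) _; rewrite lerD2r normrM.
have := HB x hx; have := normr_ge0 p.[x]; nra.
Qed.

Lemma poly_sign (p : {poly R}) : p != 0 -> ev (fun x => 0 < p.[x]) \/ ev (fun x => p.[x] < 0).
Proof.
elim/poly_ind: p => [|p c IH]; first by rewrite eqxx.
move=> hp; have [c0|c0] := eqVneq c 0.
  subst c; rewrite polyC0 addr0 in hp *.
  have pn0 : p != 0.
    by apply/eqP => p0; move: hp; rewrite p0 mul0r eqxx.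
  case: (IH pn0) => H; [left|right]; apply: ev_impP H => x x0;
    rewrite hornerMX => h; first exact: mulr_gt0.
  by rewrite pmulr_llt0.
have [B [B0 HB]] := poly_bound p.
have cp : 0 < `|c| by rewrite normr_gt0.
have key : ev (fun x => `|p.[x] * x| < `|c|).
  exists (Num.min 1 (`|c| / (B + 1))).
    by rewrite lt_min ltr01 divr_gt0 //; lra.
  move=> x /andP[x0]; rewrite lt_min => /andP[x1 x2].
  have hb : `|p.[x]| <= B by apply: HB; rewrite ger0_norm; lra.
  rewrite normrM (ger0_norm (ltW x0)).
  rewrite ltr_pdivlMr in x2; last lra.
  have := normr_ge0 p.[x]; nra.
have [cpos|cneg] := ltP 0 c.
  left; apply: ev_imp key => x; rewrite hornerMXaddC (gtr0_norm cpos) => h.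
  have := ler_norm (- (p.[x] * x)); rewrite normrN; lra.
right; apply: ev_imp key => x; rewrite hornerMXaddC (ler0_norm cneg) => h.
have := ler_norm (p.[x] * x); lra.
Qed.

Definition tame (f : R -> R) :=
  exists p q : {poly R}, q != 0 /\ ev (fun x => f x = p.[x] / q.[x]).

Lemma ev_nz (q : {poly R}) : q != 0 -> ev (fun x => q.[x] != 0).
Proof.
by case/poly_sign => H; apply: ev_imp H => x h; [rewrite gt_eqF|rewrite lt_eqF].
Qed.

Lemma tame_ext f g : ev (fun x => f x = g x) -> tame g -> tame f.
Proof.
move=> H [p [q [q0 Hq]]]; exists p, q; split => //.
by apply: ev_imp (ev_and H Hq) => x [-> ->].
Qed.

Lemma tame_extP f g : (forall x, f x = g x) -> tame g -> tame f.
Proof. by move=> H; apply: tame_ext; exists 1 => // x _; apply: H. Qed.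

Lemma tame_const c : tame (fun _ => c).
Proof. exists c%:P, 1; split; first exact: oner_neq0.
by exists 1 => // x _; rewrite !hornerC divr1. Qed.

Lemma tame_id : tame (fun x => x).
Proof. exists 'X, 1; split; first exact: oner_neq0.
by exists 1 => // x _; rewrite hornerX hornerC divr1. Qed.

Lemma tame_mul f g : tame f -> tame g -> tame (fun x => f x * g x).
Proof.
move=> [p1 [q1 [q10 H1]]] [p2 [q2 [q20 H2]]]; exists (p1 * p2), (q1 * q2).
split; first by rewrite mulf_neq0.
apply: ev_imp (ev_and H1 H2) => x [-> ->]; rewrite !hornerM invfM; ring.
Qed.

Lemma tame_inv f : tame f -> tame (fun x => (f x)^-1).
Proof.
move=> [p [q [q0 H]]]; have [p0|p0] := eqVneq p 0.
  apply: tame_ext (tame_const 0); apply: ev_imp H => x ->.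
  by rewrite p0 horner0 mul0r invr0.
exists q, p; split => //; apply: ev_imp H => x ->; by rewrite invf_div.
Qed.

Lemma tame_add f g : tame f -> tame g -> tame (fun x => f x + g x).
Proof.
move=> [p1 [q1 [q10 H1]]] [p2 [q2 [q20 H2]]]; exists (p1 * q2 + p2 * q1), (q1 * q2).
split; first by rewrite mulf_neq0.
apply: ev_imp (ev_and (ev_and H1 H2) (ev_and (ev_nz q10) (ev_nz q20))) => x [[-> ->] [a b]].
rewrite !hornerE; field; by rewrite a b.
Qed.

Lemma tame_opp f : tame f -> tame (fun x => - f x).
Proof.
move=> H; apply: tame_extP (tame_mul (tame_const (-1)) H) => x; ring.
Qed.

Lemma tame_sub f g : tame f -> tame g -> tame (fun x => f x - g x).
Proof. by move=> a b; apply: tame_add a (tame_opp b). Qed.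

Lemma tame_div f g : tame f -> tame g -> tame (fun x => f x / g x).
Proof. by move=> a b; apply: tame_mul a (tame_inv b). Qed.

Lemma tame_sign f : tame f ->
  [\/ ev (fun x => f x = 0), ev (fun x => 0 < f x) | ev (fun x => f x < 0)].
Proof.
move=> [p [q [q0 H]]]; have [p0|p0] := eqVneq p 0.
  by apply: Or31; apply: ev_imp H => x ->; rewrite p0 horner0 mul0r.
case: (poly_sign p0) => Hp; case: (poly_sign q0) => Hq.
- apply: Or32; apply: ev_imp (ev_and H (ev_and Hp Hq)) => x [-> [a b]].
  by rewrite divr_gt0.
- apply: Or33; apply: ev_imp (ev_and H (ev_and Hp Hq)) => x [-> [a b]].
  by rewrite pmulr_rlt0 // invr_lt0.
- apply: Or33; apply: ev_imp (ev_and H (ev_and Hp Hq)) => x [-> [a b]].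
  by rewrite nmulr_rlt0 // invr_gt0.
- apply: Or32; apply: ev_imp (ev_and H (ev_and Hp Hq)) => x [-> [a b]].
  by rewrite nmulr_rgt0 // invr_lt0.
Qed.

Lemma evc_le f g : tame f -> tame g -> evc (fun x => f x <= g x).
Proof.
move=> a b; case: (tame_sign (tame_sub b a)) => H.
- exists true; apply: ev_imp H => x /eqP; rewrite subr_eq0 => /eqP ->; by rewrite lexx.
- exists true; apply: ev_imp H => x; rewrite subr_gt0 => h; exact: ltW.
- exists false; apply: ev_imp H => x; rewrite subr_lt0 => h; by rewrite leNgt h.
Qed.

Lemma evc_lt f g : tame f -> tame g -> evc (fun x => f x < g x).
Proof.
move=> a b; apply: evc_ext (evc_map negb (evc_le b a)); exists 1 => // x _.
by rewrite ltNge.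
Qed.

Lemma evc_eq f g : tame f -> tame g -> evc (fun x => f x == g x).
Proof.
move=> a b; apply: evc_ext (evc_map (fun p => p.1 && p.2) (evc_pair (evc_le a b) (evc_le b a))).
by exists 1 => // x _ /=; rewrite eq_le.
Qed.

Lemma tame_if (b : R -> bool) f g : evc b -> tame f -> tame g ->
  tame (fun x => if b x then f x else g x).
Proof.
move=> [[|] Hb] a c; [apply: tame_ext a|apply: tame_ext c]; by apply: ev_imp Hb => x ->.
Qed.

Lemma tame_abs f : tame f -> tame (fun x => `|f x|).
Proof.
move=> a; apply: tame_extP (tame_if (evc_le (tame_const 0) a) a (tame_opp a)) => x.
by case: ifP => h; [rewrite ger0_norm|rewrite ltr0_norm // ltNge h].
Qed.

Lemma tame_sum (I : Type) (r : seq I) (P : pred I) (F : I -> R -> R) :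
  (forall i, tame (F i)) -> tame (fun x => \sum_(i <- r | P i) F i x).
Proof.
move=> H; elim: r => [|a r IH].
  by apply: tame_extP (tame_const 0) => x; rewrite big_nil.
case Pa: (P a).
  by apply: tame_extP (tame_add (H a) IH) => x; rewrite big_cons Pa.
by apply: tame_extP IH => x; rewrite big_cons Pa.
Qed.

End Ev.



Section P.
Variable R : realType.
Definition Epsi (a b : bool) (r : R) : \bar R := if a then (if b then 0%E else +oo%E) else r%:E.

Lemma evc_Ele_c c1 c2 c3 c4 (r1 r2 : R -> R) : tame r1 -> tame r2 ->
  evc (fun x => (Epsi c1 c2 (r1 x) <= Epsi c3 c4 (r2 x))%E).
Proof.
move=> H1 H2.
case: c1 c2 c3 c4 => [] [] [] [] /=; try
 first [ exact: evc_const
       | apply: evc_ext (evc_le H1 H2); exists 1 => // x _ /=; by rewrite ?lee_fin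
       | apply: evc_ext (evc_le (tame_const 0) H2); exists 1 => // x _ /=; by rewrite ?lee_fin
       | apply: evc_ext (evc_le H1 (tame_const 0)); exists 1 => // x _ /=; by rewrite ?lee_fin
       | apply: evc_ext (evc_const false); exists 1 => // x _ /=; by []
       | apply: evc_ext (evc_const true); exists 1 => // x _ /=; by rewrite ?leey ].
all: by exists true; exists 1 => // x _; rewrite leey.
Qed.
End P.

Section P2.
Variable R : realType.

Lemma evc_Ele (a1 b1 a2 b2 : R -> bool) (r1 r2 : R -> R) :
  evc a1 -> evc b1 -> evc a2 -> evc b2 -> tame r1 -> tame r2 ->
  evc (fun x => (Epsi (a1 x) (b1 x) (r1 x) <= Epsi (a2 x) (b2 x) (r2 x))%E).
Proof.
move=> [c1 H1] [c2 H2] [c3 H3] [c4 H4] t1 t2.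
apply: evc_ext (evc_Ele_c c1 c2 c3 c4 t1 t2).
by apply: ev_imp (ev_and (ev_and H1 H2) (ev_and H3 H4)) => x [[-> ->] [-> ->]].
Qed.

Lemma evc_forall (I : finType) (A : pred I) (b : I -> R -> bool) :
  (forall i, evc (b i)) -> evc (fun x => [forall i in A, b i x]).
Proof.
move=> H; apply: evc_ext (evc_map (fun f : {ffun I -> bool} => [forall i in A, f i]) (evc_ffun H)).
by exists 1 => // x _; apply: eq_forallb => i; rewrite ffunE.
Qed.

Lemma evc_set (I : finType) (A : pred I) (b : I -> R -> bool) :
  (forall i, evc (b i)) -> evc (fun x => [set i in A | b i x]).
Proof.
move=> H; apply: evc_ext (evc_map (fun f : {ffun I -> bool} => [set i in A | f i]) (evc_ffun H)).
by exists 1 => // x _; apply/setP => i; rewrite !inE ffunE.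
Qed.

Definition tamev p (v : R -> 'cV[R]_p) := forall i, tame (fun x => v x i 0).

Variables (n m : nat) (src tgt : 'I_m -> 'I_n.+1) (T : {set 'I_m} -> {set 'I_m}).
Variable F : R -> 'cV[R]_m.
Hypothesis tF : tamev F.

Lemma tame_bigsum (I : finType) (A : {set I}) (G : I -> R -> R) :
  (forall i, tame (G i)) -> tame (fun x => \sum_(j in A) G j x).
Proof. move=> H; exact: (@tame_sum R I (index_enum I) (fun j => j \in A) G H). Qed.

Lemma tame_bigsumT (I : finType) (G : I -> R -> R) :
  (forall i, tame (G i)) -> tame (fun x => \sum_j G j x).
Proof. move=> H; exact: (@tame_sum R I (index_enum I) predT G H). Qed.

Lemma tamev_rebal_d S d g : tamev d -> tamev g ->
  tamev (fun x => @rebal_d R n m src tgt S (d x) (g x)).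
Proof.
move=> Hd Hg i.
have Hsd := @tame_bigsum _ (@Defs.comp n m src tgt S i) (fun j x => d x j 0) (fun j => Hd j).
have Hsg := @tame_bigsum _ (@Defs.comp n m src tgt S i) (fun j x => g x j 0) (fun j => Hg j).
apply: tame_extP (tame_if (evc_eq Hsg (tame_const 0))
   (tame_if (evc_eq Hsd (tame_const 0)) (Hd i) (tame_const 0))
   (tame_if (evc_le (tame_const 1) (tame_div Hsd Hsg)) (tame_div (Hd i) (tame_div Hsd Hsg)) (Hd i))) => x.
by rewrite mxE.
Qed.

Lemma tamev_rebal_g S d g : tamev d -> tamev g ->
  tamev (fun x => @rebal_g R n m src tgt S (d x) (g x)).
Proof.
move=> Hd Hg i.
have Hsd := @tame_bigsum _ (@Defs.comp n m src tgt S i) (fun j x => d x j 0) (fun j => Hd j).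
have Hsg := @tame_bigsum _ (@Defs.comp n m src tgt S i) (fun j x => g x j 0) (fun j => Hg j).
apply: tame_extP (tame_if (evc_eq Hsg (tame_const 0))
   (Hg i)
   (tame_if (evc_le (tame_const 1) (tame_div Hsd Hsg)) (Hg i) (tame_mul (tame_div Hsd Hsg) (Hg i)))) => x.
by rewrite mxE.
Qed.

Lemma tamev_mulmx p q (A : 'M[R]_(p, q)) v : tamev v -> tamev (fun x => A *m v x).
Proof.
move=> Hv i; apply: tame_extP (@tame_bigsumT _ (fun j x => A i j * v x j 0)
   (fun j => tame_mul (tame_const _) (Hv j))) => x.
by rewrite mxE.
Qed.

Lemma tamev_sub p (u v : R -> 'cV[R]_p) : tamev u -> tamev v -> tamev (fun x => u x - v x).
Proof. by move=> a b i; apply: tame_extP (tame_sub (a i) (b i)) => x; rewrite !mxE. Qed.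

Lemma evc_psi (f : R -> 'cV[R]_m) e e' : tamev f ->
  evc (fun x => (psi (F x) (f x) e' <= psi (F x) (f x) e)%E).
Proof.
move=> Hf.
have h e0 := evc_Ele (evc_eq (tF e') (tame_const 0)) (evc_eq (Hf e') (tame_const 0))
    (evc_eq (tF e0) (tame_const 0)) (evc_eq (Hf e0) (tame_const 0))
    (tame_div (tame_abs (Hf e')) (tF e')) (tame_div (tame_abs (Hf e0)) (tF e0)).
exact: (h e).
Qed.

Lemma evc_psi1 (f : R -> 'cV[R]_m) e : tamev f ->
  evc (fun x => (psi (F x) (f x) e <= 1%:E)%E).
Proof.
move=> Hf.
have h := evc_Ele (evc_eq (tF e) (tame_const 0)) (evc_eq (Hf e) (tame_const 0))
    (@evc_const R _ false) (@evc_const R _ false)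
    (tame_div (tame_abs (Hf e)) (tF e)) (tame_const 1).
exact: h.
Qed.

Lemma casc_evc fuel : forall S Fail d g, tamev d -> tamev g ->
  evc (fun x => @cascade_from R n m src tgt T (F x) fuel S Fail (d x) (g x)).
Proof.
elim: fuel => [|fuel IH] S Fail d g Hd Hg.
  apply: evc_ext (@evc_const R _ ([:: Fail], S :\: Fail)); exists 1 => // x _ /=.
  by case: ifP.
set S' := S :\: Fail.
have Hd' := tamev_rebal_d S' Hd Hg.
have Hg' := tamev_rebal_g S' Hd Hg.
have Hf := tamev_mulmx (@ptdf R n m src tgt S') (tamev_sub Hd' Hg').
have [c Hc] := evc_forall (mem S') (fun e => evc_psi1 e Hf).
have [M0 HM] := evc_set (mem S') (fun e => evc_forall (mem S') (fun e' => evc_psi e e' Hf)).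
have [r0 Hr] := IH S' (T M0) _ _ Hd' Hg'.
exists (if c then ([:: Fail], S') else (Fail :: r0.1, r0.2)).
apply: ev_imp (ev_and Hc (ev_and HM Hr)) => x [h1 [h2 h3]] /=.
rewrite -/S' h1; case: c {Hc} h1 => // h1.
by rewrite h2 h3.
Qed.

End P2.



Section LA.
Variable R : realType.

Lemma sub_AAt p q (B : 'M[R]_(p,q)) : (B^T <= B *m B^T)%MS.
Proof.
set K := kermx (B *m B^T).
have KB : K *m B = 0.
  have h0 : (K *m B) *m (K *m B)^T = 0.
    by rewrite trmx_mul !mulmxA -(mulmxA K B) mulmx_ker mul0mx.
  move: h0; set M := K *m B => h0; clearbody M.
  apply/matrixP => i j; rewrite [RHS]mxE.
  have := congr1 (fun M : 'M_p => M i i) h0; rewrite !mxE => /eqP.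
  rewrite psumr_eq0; last by move=> l _; rewrite mxE -expr2 sqr_ge0.
  move=> /allP /(_ j (mem_index_enum _)) /=; rewrite mxE -expr2 sqrf_eq0.
  by move/eqP.
have sK : (K <= kermx B)%MS by rewrite sub_kermx KB.
have := mxrankS sK; rewrite !mxrank_ker => hr.
have r1 := rank_leq_row (B *m B^T); have r2 := rank_leq_row B.
have hle : (\rank B <= \rank (B *m B^T))%N by lia.
have := (mxrank_leqif_sup (submxMl B B^T)).2.
rewrite mxrank_tr => <-; rewrite eqn_leq hle andbT.
by rewrite -[X in (_ <= X)%N]mxrank_tr mxrankS // submxMl.
Qed.
End LA.

Section QP.
Variables (R : realType) (k N : nat) (A : 'M[R]_(k, N)).

Definition feas (b : 'cV[R]_k) (g : 'cV[R]_N) := forall i, (A *m g) i 0 <= b i 0.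
Definition feasb (b : 'cV[R]_k) (g : 'cV[R]_N) := [forall i, (A *m g) i 0 <= b i 0].
Lemma feasP b g : reflect (feas b g) (feasb b g).
Proof. exact: forallP. Qed.

Definition nrm (g : 'cV[R]_N) := \sum_i g i 0 ^+ 2.
Definition dot (u v : 'cV[R]_N) := \sum_i u i 0 * v i 0.

Lemma nrm_ge0 g : 0 <= nrm g.
Proof. by apply: sumr_ge0 => i _; rewrite sqr_ge0. Qed.

Lemma nrmD u v : nrm (u + v) = nrm u + 2 * dot u v + nrm v.
Proof.
rewrite /nrm /dot mulr_sumr -!big_split; apply: eq_bigr => i _ /=; rewrite !mxE; ring.
Qed.

Definition rowsJ (J : {set 'I_k}) : 'M[R]_(k, N) := \matrix_(i, j) (if i \in J then A i j else 0).
Definition vecJ (J : {set 'I_k}) (b : 'cV[R]_k) : 'cV[R]_k := \col_i (if i \in J then b i 0 else 0).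
Definition candM J : 'M[R]_(k, N) := pinvmx (rowsJ J *m (rowsJ J)^T) *m rowsJ J.
Definition cand J (b : 'cV[R]_k) : 'cV[R]_N := ((vecJ J b)^T *m candM J)^T.

Lemma rowsJ_mul J (g : 'cV[R]_N) i : (rowsJ J *m g) i 0 = if i \in J then (A *m g) i 0 else 0.
Proof.
rewrite !mxE; case: ifP => h; first by apply: eq_bigr => j _; rewrite mxE h.
by apply: big1 => j _; rewrite mxE h mul0r.
Qed.

Lemma LN J b g : rowsJ J *m g = vecJ J b ->
  rowsJ J *m cand J b = vecJ J b /\ nrm (cand J b) <= nrm g.
Proof.
move=> hg; set AJ := rowsJ J in hg *; set bJ := vecJ J b in hg *; set M := AJ *m AJ^T.
have hb : (bJ^T <= M)%MS.
  rewrite -hg trmx_mul; exact: submx_trans (submxMl _ _) (sub_AAt AJ).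
set y := bJ^T *m pinvmx M.
have hc : cand J b = AJ^T *m y^T by rewrite /cand /candM mulmxA trmx_mul.
have hAh : AJ *m cand J b = bJ.
  rewrite hc mulmxA -/M -[LHS]trmxK trmx_mul trmxK.
  have -> : M^T = M by rewrite /M trmx_mul trmxK.
  by rewrite /y mulmxKpV // trmxK.
split => //.
set h := cand J b in hc hAh *.
have -> : g = h + (g - h) by rewrite addrC subrK.
rewrite nrmD.
have -> : dot h (g - h) = 0.
  have : (h^T *m (g - h)) 0 0 = 0.
    have e1 : h^T = y *m AJ by rewrite hc trmx_mul !trmxK.
    by rewrite e1 -mulmxA mulmxBr hg hAh subrr mulmx0 mxE.
  move=> <-; rewrite mxE /dot; apply: eq_bigr => i _; by rewrite !mxE.
have := nrm_ge0 (g - h); lra.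
Qed.

Definition NA (b : 'cV[R]_k) (g : 'cV[R]_N) := [set i | (A *m g) i 0 != b i 0].

Lemma Aaff (g h : 'cV[R]_N) t i : (A *m (g + t *: (h - g))) i 0 = (A *m g) i 0 + t * ((A *m h) i 0 - (A *m g) i 0).
Proof. by rewrite mulmxDr -scalemxAr mulmxBr !mxE. Qed.

Lemma step b g : feas b g ->
  feas b (cand (~: NA b g) b) \/
  exists g', [/\ feas b g', nrm g' <= nrm g & NA b g' \proper NA b g].
Proof.
move=> hg; set J := ~: NA b g.
have hJ : rowsJ J *m g = vecJ J b.
  apply/matrixP => i j; rewrite ord1 rowsJ_mul [RHS]mxE; case: ifP => //.
  by rewrite !inE negbK => /eqP.
have [hAh hn] := LN hJ; set h := cand J b in hAh hn *.
have hJh i : i \in J -> (A *m h) i 0 = b i 0.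
  move=> iJ; have := congr1 (fun v : 'cV_k => v i 0) hAh; rewrite /= rowsJ_mul [RHS]mxE iJ.
  by [].
case: (boolP (feasb b h)) => [/feasP|]; first by left.
move=> /forallPn [i0]; rewrite -ltNge => hi0.
right.
set bad := [set i | b i 0 < (A *m h) i 0].
have bad_nJ i : i \in bad -> i \notin J.
  rewrite inE => hi; apply/negP => /hJh he; by rewrite he ltxx in hi.
have bad_lt i : i \in bad -> (A *m g) i 0 < b i 0.
  move=> /bad_nJ; rewrite !inE negbK lt_neqAle => ->; exact: hg.
set ratio := fun i => (b i 0 - (A *m g) i 0) / ((A *m h) i 0 - (A *m g) i 0).
have i0bad : i0 \in bad by rewrite inE.
case: (@arg_minP _ R _ i0 (mem bad) ratio i0bad) => i1 i1bad i1min.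
have rat_eq i : i \in bad -> ratio i * ((A *m h) i 0 - (A *m g) i 0) = b i 0 - (A *m g) i 0.
  move=> ib; have := bad_lt _ ib; move: ib; rewrite inE => ib hb.
  rewrite /ratio divfK //; apply: lt0r_neq0 => //; lra.
have rat_01 i : i \in bad -> 0 < ratio i < 1.
  move=> ib; have := bad_lt _ ib; move: (ib); rewrite inE => ib' hb.
  have hD : 0 < (A *m h) i 0 - (A *m g) i 0 by lra.
  rewrite /ratio divr_gt0 /=; try lra.
  by rewrite ltr_pdivrMr // mul1r; lra.
have [t0 t1] := andP (rat_01 _ i1bad).
move tE : (ratio i1) t0 t1 => t t0 t1.
exists (g + t *: (h - g)); split.
- move=> i; rewrite Aaff.
  case: (boolP (i \in bad)) => ib.
    have := i1min i ib; rewrite tE => hti.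
    have := rat_eq _ ib; have := bad_lt _ ib; move: ib; rewrite inE => ib.
    move=> h1 h2; have hD : 0 <= (A *m h) i 0 - (A *m g) i 0 by lra.
    have := ler_wpM2r hD hti; lra.
  move: ib; rewrite inE -leNgt => ib; have := hg i; nra.
- rewrite /nrm; apply: le_trans (_ : \sum_i ((1 - t) * g i 0 ^+ 2 + t * h i 0 ^+ 2) <= _).
    apply: ler_sum => i _.
    have -> : (g + t *: (h - g)) i 0 = g i 0 + t * (h i 0 - g i 0) by rewrite !mxE.
    have : 0 <= t * (1 - t) * (g i 0 - h i 0) ^+ 2.
      by apply: mulr_ge0; [apply: mulr_ge0; lra | apply: sqr_ge0].
    nra.
  rewrite big_split /= -!mulr_sumr -/(nrm g) -/(nrm h); nra.
- apply/properP; split.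
    apply/subsetP => i; rewrite !inE; apply: contraNN => /eqP he.
    rewrite Aaff he; move: he => /eqP he.
    have iJ : i \in J by rewrite !inE negbK he.
    by rewrite (hJh _ iJ) subrr mulr0 addr0.
  exists i1; first by have := bad_nJ _ i1bad; rewrite !inE negbK.
  rewrite inE Aaff negbK; apply/eqP; have := rat_eq _ i1bad; rewrite tE; lra.
Qed.

Lemma improve b g : feas b g -> exists J, feas b (cand J b) /\ nrm (cand J b) <= nrm g.
Proof.
move: {2}#|NA b g| (leqnn #|NA b g|) => c; elim: c g => [|c IH] g hc hg.
  case: (step hg) => [h|[g' [_ _ hp]]]; first by exists (~: NA b g); split => //; apply: (LN _).2;
    apply/matrixP => i j; rewrite ord1 rowsJ_mul [RHS]mxE; case: ifP => //; rewrite !inE negbK => /eqP.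
  by have := proper_card hp; rewrite ltnNge (leq_trans hc).
case: (step hg) => [h|[g' [hg' hn hp]]].
  exists (~: NA b g); split => //; apply: (LN _).2.
  apply/matrixP => i j; rewrite ord1 rowsJ_mul [RHS]mxE; case: ifP => //; rewrite !inE negbK => /eqP //.
have hc' : (#|NA b g'| <= c)%N by have := proper_card hp; lia.
have [J [hJ hJn]] := IH g' hc' hg'; exists J; split => //; exact: le_trans hJn hn.
Qed.


Definition isopt b g := feas b g /\ forall g', feas b g' -> nrm g <= nrm g'.

Lemma feas_mid b g1 g2 : feas b g1 -> feas b g2 -> feas b (2^-1 *: (g1 + g2)).
Proof.
move=> h1 h2 i; rewrite -scalemxAr mulmxDr !mxE.
have := h1 i; have := h2 i; rewrite !mxE; lra.
Qed.

Lemma opt_unique b g1 g2 : isopt b g1 -> isopt b g2 -> g1 = g2.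
Proof.
move=> [f1 o1] [f2 o2].
have fm := feas_mid f1 f2.
have eM : nrm (2^-1 *: (g1 + g2)) = 2^-1 * nrm g1 + 2^-1 * nrm g2 - 4^-1 * nrm (g1 - g2).
  rewrite /nrm !mulr_sumr -big_split -sumrB /=; apply: eq_bigr => i _; rewrite !mxE.
  by field; rewrite ?pnatr_eq0.
have a1 := o1 _ fm; have a2 := o2 _ fm; have a3 := o1 _ f2; have a4 := o2 _ f1.
have n0 := nrm_ge0 (g1 - g2).
have e' : 4 * nrm (2^-1 *: (g1 + g2)) = 2 * nrm g1 + 2 * nrm g2 - nrm (g1 - g2).
  by rewrite eM; field; rewrite ?pnatr_eq0.
have : nrm (g1 - g2) == 0 by apply/eqP; lra.
rewrite /nrm psumr_eq0; last by move=> i _; rewrite sqr_ge0.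
move=> /allP hz; apply/matrixP => i j; rewrite ord1.
have := hz i (mem_index_enum _); rewrite /= sqrf_eq0 !mxE subr_eq0 => /eqP.
by [].
Qed.

Lemma fin_min (I : finType) (P : pred I) (f : I -> R) :
  (exists i, P i) -> exists i, P i && [forall j, P j ==> (f i <= f j)].
Proof.
move=> [i0 Pi0]; case: (@arg_minP _ R I i0 P f Pi0) => i Pi H.
exists i; rewrite Pi /=; apply/forallP => j; apply/implyP => /H.
by [].
Qed.

Definition PJ b J := feasb b (cand J b) &&
  [forall J', feasb b (cand J' b) ==> (nrm (cand J b) <= nrm (cand J' b))].

Lemma PJ_exists b g : feas b g -> exists J, PJ b J.
Proof.
move=> hg; have [J1 [h1 _]] := improve hg.
have [J /andP[h2 h3]] := @fin_min _ (fun J => feasb b (cand J b)) (fun J => nrm (cand J b))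
  (ex_intro _ J1 (introT (feasP _ _) h1)).
by exists J; rewrite /PJ h2.
Qed.

Lemma PJ_opt b J : PJ b J -> isopt b (cand J b).
Proof.
move=> /andP[/feasP h1 /forallP h2]; split => // g' hg'.
have [J' [hJ' hn]] := improve hg'.
have := implyP (h2 J') (introT (feasP _ _) hJ').
by move=> h; exact: le_trans h hn.
Qed.

End QP.



Section Z.
Variable R : realType.

Lemma evc_forallT (I : finType) (b : I -> R -> bool) :
  (forall i, evc (b i)) -> evc (fun x => [forall i, b i x]).
Proof.
move=> H; apply: evc_ext (evc_map (fun f : {ffun I -> bool} => [forall i, f i]) (evc_ffun H)).
by exists 1 => // x _; apply: eq_forallb => i; rewrite ffunE.
Qed.

Lemma tamev_const p (v : 'cV[R]_p) : tamev (fun _ => v).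
Proof. by move=> i; apply: tame_const. Qed.

Lemma tamev_add p (u v : R -> 'cV[R]_p) : tamev u -> tamev v -> tamev (fun x => u x + v x).
Proof. by move=> a b i; apply: tame_extP (tame_add (a i) (b i)) => x; rewrite !mxE. Qed.

Lemma tamev_scale p c (u : R -> 'cV[R]_p) : tamev u -> tamev (fun x => c *: u x).
Proof. by move=> a i; apply: tame_extP (tame_mul (tame_const c) (a i)) => x; rewrite !mxE. Qed.

Lemma tamev_absv p (u : R -> 'cV[R]_p) : tamev u -> tamev (fun x => absv (u x)).
Proof. by move=> a i; apply: tame_extP (tame_abs (a i)) => x; rewrite !mxE. Qed.

Lemma tamev_col p q (u : R -> 'cV[R]_p) (v : R -> 'cV[R]_q) : tamev u -> tamev v ->
  tamev (fun x => col_mx (u x) (v x)).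
Proof.
move=> a b i; rewrite -[i]splitK; case: (fintype.split i) => j /=.
  by apply: tame_extP (a j) => x; rewrite col_mxEu.
by apply: tame_extP (b j) => x; rewrite col_mxEd.
Qed.

Lemma tamev_cand k N (A : 'M[R]_(k, N)) J (b : R -> 'cV[R]_k) : tamev b ->
  tamev (fun x => cand A J (b x)).
Proof.
move=> hb i.
apply: tame_extP (@tame_bigsumT _ _ (fun j x => (if j \in J then b x j 0 else 0) * candM A J j i)
   (fun j => tame_mul (tame_if (evc_const _ (j \in J)) (hb j) (tame_const 0)) (tame_const _))) => x.
rewrite /cand !mxE; apply: eq_bigr => j _; by rewrite !mxE.
Qed.

Lemma tame_nrm N (g : R -> 'cV[R]_N) : tamev g -> tame (fun x => nrm (g x)).
Proof.
move=> hg; apply: tame_extP (@tame_bigsumT _ _ (fun j x => g x j 0 * g x j 0)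
  (fun j => tame_mul (hg j) (hg j))) => x.
by rewrite /nrm; apply: eq_bigr => j _; rewrite expr2.
Qed.

Lemma evc_PJ k N (A : 'M[R]_(k, N)) J (b : R -> 'cV[R]_k) : tamev b ->
  evc (fun x => PJ A (b x) J).
Proof.
move=> hb.
have hf J' : evc (fun x => feasb A (b x) (cand A J' (b x))).
  apply: evc_forallT => i; apply: evc_le (hb i).
  exact: (tamev_mulmx A (tamev_cand A J' hb)).
have := evc_pair (hf J) (evc_forallT (fun J' => evc_map (fun p => p.1 ==> p.2) (evc_pair (hf J')
    (evc_le (tame_nrm (tamev_cand A J hb)) (tame_nrm (tamev_cand A J' hb)))))).
move=> h; apply: evc_ext (evc_map (fun p => p.1 && p.2) h).
by exists 1.
Qed.

End Z.

Section Prob.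
Variables (R : realType) (n m : nat) (src tgt : 'I_m -> 'I_n.+1) (lam : R).
Local Notation N := n.+1.
Local Notation V := (@ptdf R n m src tgt setT).
Local Notation K := (N + (1 + (1 + (m + m))))%N.

Definition Amat : 'M[R]_(K, N) :=
  col_mx (- 1%:M) (col_mx (const_mx 1 : 'M_(1, N)) (col_mx (- (const_mx 1 : 'M_(1, N))) (col_mx V (- V)))).

Definition bvec (d : 'cV[R]_N) : 'cV[R]_K :=
  col_mx 0 (col_mx (const_mx (\sum_i d i 0)) (col_mx (const_mx (- \sum_i d i 0))
    (col_mx (lam *: absv (V *m d) + V *m d) (lam *: absv (V *m d) - V *m d)))).

Lemma feas_col p1 p2 (A1 : 'M[R]_(p1, N)) (A2 : 'M[R]_(p2, N)) b1 b2 g :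
  feas (col_mx A1 A2) (col_mx b1 b2) g <-> feas A1 b1 g /\ feas A2 b2 g.
Proof.
rewrite /feas mul_col_mx; split => [H|[H1 H2] i].
  by split => i; [have := H (lshift _ i); rewrite !col_mxEu | have := H (rshift _ i); rewrite !col_mxEd].
rewrite -[i]splitK; case: (fintype.split i) => j /=; by rewrite ?col_mxEu ?col_mxEd.
Qed.

Lemma entryB p q (u v : 'M[R]_(p, q)) i j : (u - v) i j = u i j - v i j.
Proof. by rewrite !mxE. Qed.

Lemma entryD p q (u v : 'M[R]_(p, q)) i j : (u + v) i j = u i j + v i j.
Proof. by rewrite !mxE. Qed.
Lemma entryN p q (u : 'M[R]_(p, q)) i j : (- u) i j = - u i j.
Proof. by rewrite !mxE. Qed.
Lemma entryZ p q c (u : 'M[R]_(p, q)) i j : (c *: u) i j = c * u i j.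
Proof. by rewrite !mxE. Qed.
Lemma absvE p (u : 'cV[R]_p) i : absv u i 0 = `|u i 0|.
Proof. by rewrite !mxE. Qed.

Lemma e1 (g : 'cV[R]_N) i : ((- 1%:M) *m g) i 0 = - g i 0.
Proof. by rewrite mulNmx mul1mx mxE. Qed.
Lemma e2 (g : 'cV[R]_N) i : ((const_mx 1 : 'M_(1, N)) *m g) i 0 = \sum_j g j 0.
Proof. rewrite mxE; apply: eq_bigr => j _; by rewrite mxE mul1r. Qed.
Lemma e3 (g : 'cV[R]_N) i : ((- (const_mx 1 : 'M_(1, N))) *m g) i 0 = - \sum_j g j 0.
Proof. by rewrite mulNmx mxE e2. Qed.

Lemma gfeas_iff d g : @gfeasible R n m src tgt lam d g <-> feas Amat (bvec d) g.
Proof.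
rewrite /gfeasible /Amat /bvec; split.
- case=> h1 h2 h3.
  apply/feas_col; split; first by move=> i; rewrite e1 mxE; have := h1 i; lra.
  apply/feas_col; split; first by move=> i; rewrite e2 mxE h2.
  apply/feas_col; split; first by move=> i; rewrite e3 mxE h2.
  have {}h3 e : - (lam * `|(V *m d) e 0|) <= (V *m d) e 0 - (V *m g) e 0 <= lam * `|(V *m d) e 0|.
    by have := h3 e; rewrite mulmxBr entryB.
  apply/feas_col; split => i; rewrite ?mulNmx ?(entryN, entryD, entryZ, absvE);
    have := h3 i; lra.
- move=> /feas_col [h1 /feas_col [h2 /feas_col [h3 /feas_col [h4 h5]]]]; split.
  + by move=> i; have := h1 i; rewrite e1 mxE; lra.
  + have := h2 0; have := h3 0; rewrite e2 e3 !mxE; lra.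
  + move=> e; rewrite mulmxBr entryB; have := h4 e; have := h5 e.
    rewrite ?mulNmx ?(entryN, entryD, entryZ, absvE); lra.
Qed.

Lemma gstar_cand d J : PJ Amat (bvec d) J -> @gstar R n m src tgt lam d = cand Amat J (bvec d).
Proof.
move=> hJ; have [o1 o2] := PJ_opt hJ.
set P := fun g => @gfeasible R n m src tgt lam d g /\ forall g', @gfeasible R n m src tgt lam d g' -> gobj g <= gobj g'.
have Pc : P (cand Amat J (bvec d)).
  split; first by apply/gfeas_iff.
  move=> g' /gfeas_iff /o2 h; rewrite /gobj; apply: ler_wpM2l => //; lra.
have : P (@gstar R n m src tgt lam d).
  rewrite /gstar; exact: (classical_sets.xgetPex 0 (ex_intro P _ Pc)).
move=> [f1 f2]; apply: (@opt_unique R _ _ Amat (bvec d)); last by split.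
split; first by apply/gfeas_iff.
move=> g' /gfeas_iff /f2; rewrite /gobj => h.
have : 2^-1 * nrm (@gstar R n m src tgt lam d) <= 2^-1 * nrm g' by [].
rewrite ler_pM2l //; lra.
Qed.

Lemma tamev_constmx p (f : R -> R) : tame f -> tamev (fun x => (const_mx (f x) : 'cV[R]_p)).
Proof. by move=> h i; apply: tame_extP h => x; rewrite mxE. Qed.

Lemma tamev_demand (gam : 'cV[R]_N) : tamev (fun x => demand gam x).
Proof.
move=> i; apply: tame_extP (tame_add (tame_const ((i == ord0)%:R : R)) (tame_mul (@tame_id R) (tame_const (gam i 0)))) => x.
by rewrite /demand !mxE.
Qed.

Lemma tamev_gstar (gam : 'cV[R]_N) : 0 <= lam -> (forall i, 0 <= gam i 0) ->
  tamev (fun x => @gstar R n m src tgt lam (demand gam x)).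
Proof.
move=> hl hg.
have hd := tamev_demand gam.
have hs : tame (fun x => \sum_i demand gam x i 0) := @tame_bigsumT _ _ (fun j x => demand gam x j 0) hd.
have hV := tamev_mulmx V hd.
have hb : tamev (fun x => bvec (demand gam x)).
  rewrite /bvec; apply: tamev_col; first exact: tamev_const.
  apply: tamev_col; first exact: tamev_constmx.
  apply: tamev_col; first exact: tamev_constmx (tame_opp hs).
  apply: tamev_col; first exact: tamev_add (tamev_scale _ (tamev_absv hV)) hV.
  exact: tamev_sub (tamev_scale _ (tamev_absv hV)) hV.
have hP J := evc_PJ Amat J hb.
have [c hc] := fin_all_exists hP.
case: (pickP (fun J => c J)) => [J cJ|nc].
  move=> i; apply: tame_ext (tamev_cand Amat J hb i).
  by apply: ev_imp (hc J) => x h; rewrite (@gstar_cand _ J) // h cJ.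
exfalso.
have [x [x0 hx]] := ev_ex (ev_fin hc).
have hf : feas Amat (bvec (demand gam x)) (demand gam x).
  apply/gfeas_iff; split => //.
  - move=> i; rewrite /demand !mxE; have := hg i; have : 0 <= ((i == ord0)%:R : R) by [].
    nra.
  - move=> e; rewrite subrr mulmx0 (_ : (0 : 'cV[R]_m) e 0 = 0); last by rewrite mxE.
    have := normr_ge0 ((V *m demand gam x) e 0); move: (`|_|) => a ha.
    apply/andP; split; nra.
have [J hJ] := PJ_exists hf.
by have := nc J; rewrite -hx hJ.
Qed.

End Prob.

Unset Implicit Arguments.

Theorem mainTheorem8 (R : realType) (n m : nat) (src tgt : 'I_m -> 'I_n.+1)
  (lam lamS : R) (T : {set 'I_m} -> {set 'I_m}) (gam : 'cV[R]_n.+1) (l : 'I_m) :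
  @simple_graph n m src tgt -> @connected_graph n m src tgt ->
  0 < lam < 1 -> lam <= lamS ->
  (forall M : {set 'I_m}, M != set0 -> T M != set0 /\ T M \subset M) ->
  in_Gamma gam ->
  (* orientation convention: V d >= 0 for all small eps *)
  (exists2 e1 : R, 0 < e1 & forall eps, 0 < eps < e1 ->
     forall e, 0 <= (@ptdf R n m src tgt setT *m demand gam eps) e 0) ->
  exists2 eps0 : R, 0 < eps0 &
    forall eps1 eps2, 0 < eps1 < eps0 -> 0 < eps2 < eps0 ->
      cascade src tgt lam lamS T l (demand gam eps1)
      = cascade src tgt lam lamS T l (demand gam eps2).
Proof.
move=> _ _ /andP[l0 l1] _ _ [g0 gge gsum] _.
have hd := tamev_demand gam.
have hF : tamev (fun x => lamS *: absv (@ptdf R n m src tgt setT *m demand gam x)).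
  exact: tamev_scale _ (tamev_absv (tamev_mulmx _ hd)).
have hg := @tamev_gstar R n m src tgt lam gam (ltW l0) gge.
have [c [e ep He]] := @casc_evc R n m src tgt T _ hF m setT [set l] _ _ hd hg.
exists e => // e1 e2 h1 h2.
rewrite /cascade; move: (He _ h1) (He _ h2) => /= -> ->.
by [].
Qed.
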